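(* Let $A\in\mathbb{C}^{n\times n}$ be positive definite (i.e. $A+A^*$ is Hermitian positive definite), let $C\in\mathbb{C}^{m\times m}$ be positive semidefinite (i.e. $C+C^*$ is Hermitian positive semidefinite), let $B\in\mathbb{C}^{m\times n}$ with $m\le n$, and let $$\mathcal{A}=\begin{bmatrix}A&B^*\\-B&C\end{bmatrix}$$ be singular, with linear system $\mathcal{A}u=b$. Write $A=A_P+A_S$ with $A_P$ positive definite and $A_S$ skew-Hermitian, $C=C_P+C_S$ with $C_P$ positive semidefinite and $C_S$ skew-Hermitian, and $B=B_P+B_S$ an arbitrary splitting. Let $P_\alpha\in\mathbb{C}^{n\times n}$ and $P_\beta\in\mathbb{C}^{m\times m}$ be Hermitian positive definite, and set $$\mathcal{P}=\begin{bmatrix}A_P&B_P^*\\-B_P&C_P\end{bmatrix},\quad \mathcal{S}=\begin{bmatrix}A_S&B_S^*\\-B_S&C_S\end{bmatrix},\quad \Sigma=\begin{bmatrix}P_\alpha&0\\0&P_\beta\end{bmatrix},$$ $$\Gamma_{\mathrm{EPSS}}=(\Sigma+\mathcal{S})^{-1}(\Sigma-\mathcal{P})(\Sigma+\mathcal{P})^{-1}(\Sigma-\mathcal{S}).$$ Suppose that for every $\lambda\in\sigma(\Gamma_{\mathrm{EPSS}})$ with $|\lambda|=1$ and $\lambda\neq 1$, and for every nonzero $r\in \mathrm{null}(C+C^* )$, $$r^*\big(P_\beta-B_SP_\alpha^{-1}B_P^*+C_SP_\beta^{-1}C_P\big)r\neq\frac{1+\lambda}{1-\lambda}\,r^*Cr.$$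 Then the EPSS iteration $u^{k+1}=\Gamma_{\mathrm{EPSS}}u^k+c$, with $c=2(\Sigma+\mathcal{S})^{-1}\Sigma(\Sigma+\mathcal{P})^{-1}b$, is semi-convergent, i.e. it converges to a solution of $\mathcal{A}u=b$ for every initial guess $u^0$.
   Context: The EPSS iteration is equivalently the two-step scheme $(\Sigma+\mathcal{P})u^{k+1/2}=(\Sigma-\mathcal{S})u^k+b$, $(\Sigma+\mathcal{S})u^{k+1}=(\Sigma-\mathcal{P})u^{k+1/2}+b$. $\sigma(\cdot)$ denotes the spectrum and $\mathrm{null}(\cdot)$ the null space. An iteration for a singular system is called semi-convergent if it converges to a solution of the system for any initial guess; the system $\mathcal{A}u=b$ is understood to be consistent (solvable). *)

(* Defs.v *)
From HB Require Import structures.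
From mathcomp Require Import all_boot all_order all_algebra.
From mathcomp Require Import reals.
From mathcomp Require Export complex.
Set Implicit Arguments. Unset Strict Implicit. Unset Printing Implicit Defensive.
Import Order.TTheory GRing.Theory Num.Theory.
Local Open Scope ring_scope.

Definition ctrmx (F : numClosedFieldType) (p q : nat) (M : 'M[F]_(p, q)) : 'M[F]_(q, p) :=
  map_mx (fun z => z^*) M^T.

Definition hermitian (F : numClosedFieldType) (p : nat) (H : 'M[F]_p) : Prop :=
  ctrmx H = H.

Definition skew_hermitian (F : numClosedFieldType) (p : nat) (H : 'M[F]_p) : Prop :=
  ctrmx H = - H.

Definition qform (F : numClosedFieldType) (p : nat) (H : 'M[F]_p) (x : 'cV[F]_p) : F :=
  (ctrmx x *m H *m x) 0 0.

Definition hpd (F : numClosedFieldType) (p : nat) (H : 'M[F]_p) : Prop :=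
  hermitian H /\ forall x : 'cV[F]_p, x != 0 -> 0 < qform H x.

Definition hpsd (F : numClosedFieldType) (p : nat) (H : 'M[F]_p) : Prop :=
  hermitian H /\ forall x : 'cV[F]_p, 0 <= qform H x.

Definition posdef (F : numClosedFieldType) (p : nat) (M : 'M[F]_p) : Prop :=
  hpd (M + ctrmx M).

Definition possemidef (F : numClosedFieldType) (p : nat) (M : 'M[F]_p) : Prop :=
  hpsd (M + ctrmx M).

Definition saddle (F : numClosedFieldType) (n m : nat)
  (A : 'M[F]_n) (B : 'M[F]_(m, n)) (C : 'M[F]_m) : 'M[F]_(n + m) :=
  block_mx A (ctrmx B) (- B) C.

Definition cvg_vec (R : realType) (p : nat) (u : nat -> 'cV[R[i]]_p) (l : 'cV[R[i]]_p) : Prop :=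
  forall e : R, 0 < e -> exists N : nat, forall k : nat, (N <= k)%N ->
    forall j : 'I_p, `|u k j 0 - l j 0| < (e%:C)%C.

Definition iterates (F : ringType) (p : nat) (G : 'M[F]_p) (c u0 : 'cV[F]_p) (k : nat) : 'cV[F]_p :=
  iter k (fun u => G *m u + c) u0.

Definition semi_convergent (R : realType) (p : nat) (G : 'M[R[i]]_p) (c : 'cV[R[i]]_p)
  (M : 'M[R[i]]_p) (b : 'cV[R[i]]_p) : Prop :=
  forall u0 : 'cV[R[i]]_p, exists2 ustar : 'cV[R[i]]_p,
    M *m ustar = b & cvg_vec (iterates G c u0) ustar.

(* Main.v *)
From Pilot Require Import Defs.
From HB Require Import structures.
From mathcomp Require Import all_boot all_order all_algebra.
From mathcomp Require Import reals complex.
From mathcomp Require Import ring lra zify.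
Import Order.TTheory GRing.Theory Num.Theory.
Local Open Scope ring_scope.
Set Implicit Arguments. Unset Strict Implicit. Unset Printing Implicit Defensive.
Import Pilot.Defs.
Section CTR.
Variable F : numClosedFieldType.

Lemma ctrmxE p q (M : 'M[F]_(p,q)) i j : ctrmx M i j = (M j i)^*.
Proof. by rewrite /ctrmx !mxE. Qed.

Lemma ctrmxK p q (M : 'M[F]_(p,q)) : ctrmx (ctrmx M) = M.
Proof. by apply/matrixP=> i j; rewrite !ctrmxE conjCK. Qed.

Lemma ctrmxD p q (M N : 'M[F]_(p,q)) : ctrmx (M + N) = ctrmx M + ctrmx N.
Proof. by apply/matrixP=> i j; rewrite /ctrmx !mxE rmorphD. Qed.

Lemma ctrmxN p q (M : 'M[F]_(p,q)) : ctrmx (- M) = - ctrmx M.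
Proof. by apply/matrixP=> i j; rewrite /ctrmx !mxE rmorphN. Qed.

Lemma ctrmxB p q (M N : 'M[F]_(p,q)) : ctrmx (M - N) = ctrmx M - ctrmx N.
Proof. by rewrite ctrmxD ctrmxN. Qed.

Lemma ctrmx0 p q : ctrmx (0 : 'M[F]_(p,q)) = 0.
Proof. by apply/matrixP=> i j; rewrite /ctrmx !mxE conjC0. Qed.

Lemma ctrmxZ p q a (M : 'M[F]_(p,q)) : ctrmx (a *: M) = a^* *: ctrmx M.
Proof. by apply/matrixP=> i j; rewrite /ctrmx !mxE rmorphM. Qed.

Lemma ctrmx_mul p q r (M : 'M[F]_(p,q)) (N : 'M[F]_(q,r)) :
  ctrmx (M *m N) = ctrmx N *m ctrmx M.
Proof.
apply/matrixP=> i j; rewrite ctrmxE !mxE rmorph_sum; apply: eq_bigr => k _.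
by rewrite !ctrmxE rmorphM mulrC.
Qed.

Lemma ctrmx_scalar p a : ctrmx (a%:M : 'M[F]_p) = (a^*)%:M.
Proof.
by apply/matrixP=> i j; rewrite /ctrmx !mxE rmorphMn eq_sym.
Qed.

Lemma ctrmx_block p1 p2 q1 q2 (a : 'M[F]_(p1,q1)) (b : 'M[F]_(p1,q2))
  (c : 'M[F]_(p2,q1)) (d : 'M[F]_(p2,q2)) :
  ctrmx (block_mx a b c d) = block_mx (ctrmx a) (ctrmx c) (ctrmx b) (ctrmx d).
Proof. by rewrite /ctrmx tr_block_mx map_block_mx. Qed.

Lemma ctrmx_col p1 p2 q (a : 'M[F]_(p1,q)) (b : 'M[F]_(p2,q)) :
  ctrmx (col_mx a b) = row_mx (ctrmx a) (ctrmx b).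
Proof. by rewrite /ctrmx tr_col_mx map_row_mx. Qed.

Lemma ctrmx_inv p (M : 'M[F]_p) : ctrmx (invmx M) = invmx (ctrmx M).
Proof. by rewrite /ctrmx trmx_inv map_invmx. Qed.

Lemma ctrmx11 (M : 'M[F]_1) : ctrmx M 0 0 = (M 0 0)^*.
Proof. by rewrite ctrmxE. Qed.

Definition bf p (H : 'M[F]_p) (x y : 'cV[F]_p) : F := (ctrmx x *m H *m y) 0 0.

Lemma qformE p (H : 'M[F]_p) (x : 'cV[F]_p) : qform H x = bf H x x.
Proof. by []. Qed.

Lemma bfDr p (H : 'M[F]_p) (x y z : 'cV[F]_p) : bf H x (y + z) = bf H x y + bf H x z.
Proof. by rewrite /bf mulmxDr mxE. Qed.

Lemma bfDl p (H : 'M[F]_p) (x y z : 'cV[F]_p) : bf H (y + z) x = bf H y x + bf H z x.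
Proof. by rewrite /bf ctrmxD !mulmxDl mxE. Qed.

Lemma bfZr p (H : 'M[F]_p) (x y : 'cV[F]_p) (a : F) : bf H x (a *: y) = a * bf H x y.
Proof. by rewrite /bf -scalemxAr mxE. Qed.

Lemma bfZl p (H : 'M[F]_p) (x y : 'cV[F]_p) (a : F) : bf H (a *: y) x = a^* * bf H y x.
Proof. by rewrite /bf ctrmxZ -!scalemxAl mxE. Qed.

Lemma bf_herm p (H : 'M[F]_p) (x y : 'cV[F]_p) : hermitian H -> bf H y x = (bf H x y)^*.
Proof.
move=> hH; rewrite /bf -ctrmx11 !ctrmx_mul ctrmxK hH mulmxA //.
Qed.

Lemma qformD p (H : 'M[F]_p) (x y : 'cV[F]_p) :
  qform H (x + y) = qform H x + bf H x y + bf H y x + qform H y.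
Proof. by rewrite !qformE bfDl !bfDr !addrA. Qed.

Lemma qformZ p (H : 'M[F]_p) (x : 'cV[F]_p) (a : F) : qform H (a *: x) = `|a| ^+ 2 * qform H x.
Proof. by rewrite !qformE bfZl bfZr mulrA normCK [a^* * a]mulrC. Qed.

Lemma qform_ctr p (M : 'M[F]_p) (x : 'cV[F]_p) : qform (ctrmx M) x = (qform M x)^*.
Proof. by rewrite /qform -ctrmx11 !ctrmx_mul ctrmxK mulmxA. Qed.

Lemma qform_mul p (M : 'M[F]_p) (N : 'M[F]_p) (x : 'cV[F]_p) :
  qform (ctrmx N *m M *m N) x = qform M (N *m x).
Proof. by rewrite /qform ctrmx_mul !mulmxA. Qed.

Lemma qformDm p (M N : 'M[F]_p) (x : 'cV[F]_p) : qform (M + N) x = qform M x + qform N x.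
Proof. by rewrite /qform mulmxDr mulmxDl mxE. Qed.

Lemma qform_herm_real p (H : 'M[F]_p) (x : 'cV[F]_p) : hermitian H -> (qform H x)^* = qform H x.
Proof. by move=> hH; rewrite -qform_ctr hH. Qed.

Lemma col_kernel p (M : 'M[F]_p) : \det M = 0 -> exists2 x : 'cV[F]_p, x != 0 & M *m x = 0.
Proof.
move=> /eqP; rewrite -det_tr => /det0P [v v0 vM]; exists v^T.
  by rewrite trmx_eq0.
by rewrite -[M]trmxK -trmx_mul vM trmx0.
Qed.

Lemma unit_of_pd p (M : 'M[F]_p) : hpd (M + ctrmx M) -> M \in unitmx.
Proof.
move=> [_ hpos]; rewrite unitmxE unitfE; apply/eqP => /col_kernel [x x0 Mx].
have := hpos x x0; rewrite qformDm qform_ctr.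
have -> : qform M x = 0 by rewrite /qform -mulmxA Mx mulmx0 mxE.
by rewrite conjC0 addr0 ltxx.
Qed.


Lemma contr_eig p (H T : 'M[F]_p) : hpd H ->
  (forall x, qform H (T *m x) <= qform H x) ->
  forall (l : F) (x : 'cV[F]_p), x != 0 -> T *m x = l *: x -> `|l| <= 1.
Proof.
move=> [_ hpos] hc l x x0 Tx; have := hc x; rewrite Tx qformZ.
by rewrite ger_pMl ?hpos // expr_le1.
Qed.

Lemma contr_idx p (H T : 'M[F]_p) : hpd H ->
  (forall x, qform H (T *m x) <= qform H x) ->
  forall v : 'cV[F]_p, T *m (T *m v - v) = T *m v - v -> T *m v = v.
Proof.
move=> [hH hpos] hc v; set x := T *m v - v => Tx.
apply/eqP; rewrite -subr_eq0 -/x; apply/negPn/negP => x0.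
have q0 := hpos x x0; set q := qform H x in q0.
have qn0 : q != 0 by rewrite gt_eqF.
pose s := - bf H x v / q; pose v' := v + s *: x.
have Tv' : T *m v' = v' + x.
  have Tvx : T *m v = v + x by rewrite /x addrC subrK.
  by rewrite /v' mulmxDr -scalemxAr Tx Tvx addrAC.
have h1 : bf H x v' = 0.
  by rewrite /v' bfDr bfZr -qformE -/q /s divfK // addrN.
have h2 : bf H v' x = 0 by rewrite bf_herm // h1 conjC0.
have := hc v'; rewrite Tv' qformD h1 h2 !addr0 -/q.
by rewrite gerDl => /(lt_le_trans q0); rewrite ltxx.
Qed.

End CTR.

Section Scal.
Variable R : realType.

Definition scvg (u : nat -> R[i]) :=
  forall e : R, 0 < e -> exists N : nat, forall k, (N <= k)%N -> `|u k| < (e%:C)%C.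

Definition nr (z : R[i]) : R := Re `|z|.

Lemma normR (z : R[i]) : `|z| = ((nr z)%:C)%C.
Proof. by rewrite /nr normc_def. Qed.

Lemma nr_ge0 z : 0 <= nr z.
Proof. by rewrite -ler0c -normR. Qed.

Lemma nrD x y : nr (x + y) <= nr x + nr y.
Proof. by rewrite -lecR rmorphD /= -!normR ler_normD. Qed.

Lemma nrM x y : nr (x * y) = nr x * nr y.
Proof. by apply: complexI; rewrite rmorphM /= -!normR normrM. Qed.

Lemma nr_lt (z : R[i]) e : (`|z| < (e%:C)%C) = (nr z < e).
Proof. by rewrite normR ltcR. Qed.

Lemma scal_cvg (a : R[i]) (s t : nat -> R[i]) : `|a| < 1 ->
  (forall k, s k.+1 = a * s k + t k) -> scvg t -> scvg s.
Proof.
rewrite normR -(rmorph1 (real_complex R)) ltcR => a1 rec ht e e0.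
set al := nr a in a1.
have al0 : 0 <= al := nr_ge0 a.
pose d := (1 - al) * e / 4.
have d0 : 0 < d by rewrite /d; apply: divr_gt0 => //; apply: mulr_gt0 => //; lra.
have [N hN] := ht d d0.
have step : forall k, (N <= k)%N -> nr (s k.+1) <= al * nr (s k) + d.
  move=> k Nk; rewrite rec; apply: le_trans (nrD _ _) _; rewrite nrM lerD2l.
  by apply: ltW; rewrite -nr_lt; apply: hN.
pose K := Num.bound (nr (s N) / d).
have hK : nr (s N) < K%:R * d.
  rewrite -ltr_pdivrMr //; apply: archi_boundP; apply: divr_ge0 => //; first exact: nr_ge0.
  exact: ltW.
have Q : forall j, nr (s (N + j)%N) < e / 2 \/ nr (s (N + j)%N) <= nr (s N) - j%:R * d.
  elim=> [|j IH]; first by right; rewrite addn0 mul0r subr0.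
  have st := step (N + j)%N (leq_addr _ _); rewrite addnS.
  set sg := nr (s (N + j)%N) in IH st *.
  have sg0 : 0 <= sg := nr_ge0 _.
  have [lt|ge] := ltP sg (e / 2).
    left; apply: le_lt_trans st _.
    have : al * sg <= al * (e / 2) by apply: ler_wpM2l => //; exact: ltW.
    rewrite /d; nra.
  right; case: IH => [IH|IH]; first by exfalso; move: ge; rewrite leNgt IH.
  have : (1 - al) * (e / 2) <= (1 - al) * sg by apply: ler_wpM2l => //; lra.
  have h2d : 2 * d = (1 - al) * (e / 2) by rewrite /d; field.
  have -> : j.+1%:R = j%:R + 1 :> R by rewrite -natr1.
  move: st IH; rewrite mulrDl mul1r; lra.
exists (N + K)%N => k Nk; rewrite nr_lt.
have kE : k = (N + (k - N))%N by rewrite subnKC //; lia.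
rewrite kE; case: (Q (k - N)%N) => [h|h]; first by lra.
have hKk : (K <= k - N)%N by lia.
have : K%:R * d <= (k - N)%N%:R * d by apply: ler_wpM2r; [exact: ltW | rewrite ler_nat].
have := nr_ge0 (s (N + (k - N))%N); lra.
Qed.

Lemma cvg_vec_of p (u : nat -> 'cV[R[i]]_p) (l : 'cV[R[i]]_p) :
  (forall j, scvg (fun k => u k j 0 - l j 0)) -> cvg_vec u l.
Proof.
move=> h e e0.
have : forall j : 'I_p, exists N, forall k, (N <= k)%N -> `|u k j 0 - l j 0| < (e%:C)%C.
  by move=> j; exact: h.
case/fin_all_exists => f hf; exists (\max_j f j)%N => k Nk j; apply: hf.
apply: leq_trans _ Nk; exact: leq_bigmax.
Qed.

Lemma cvg_vec_to p (u : nat -> 'cV[R[i]]_p) (l : 'cV[R[i]]_p) :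
  cvg_vec u l -> forall j, scvg (fun k => u k j 0 - l j 0).
Proof. by move=> h j e e0; have [N hN] := h e e0; exists N => k Nk; apply: hN. Qed.

Definition itm p (T : 'M[R[i]]_p) k (x : 'cV[R[i]]_p) := iter k (fun u => T *m u) x.

Lemma itmS p (T : 'M[R[i]]_p) k x : itm T k.+1 x = T *m itm T k x.
Proof. by []. Qed.

Lemma itm_comm p (T A : 'M[R[i]]_p) k x : A *m T = T *m A ->
  itm T k (A *m x) = A *m itm T k x.
Proof. by move=> hA; elim: k => [|k IH] //; rewrite !itmS IH !mulmxA hA. Qed.

Lemma itmD p (T : 'M[R[i]]_p) k x y : itm T k (x + y) = itm T k x + itm T k y.
Proof. by elim: k => [|k IH] //; rewrite !itmS IH mulmxDr. Qed.

Lemma itmB p (T : 'M[R[i]]_p) k x y : itm T k (x - y) = itm T k x - itm T k y.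
Proof. by elim: k => [|k IH] //; rewrite !itmS IH mulmxBr. Qed.

Lemma itm_fix p (T : 'M[R[i]]_p) k w : T *m w = w -> itm T k w = w.
Proof. by move=> hw; elim: k => [|k IH] //; rewrite itmS IH hw. Qed.

Lemma itm0 p (T : 'M[R[i]]_p) k : itm T k 0 = 0.
Proof. by elim: k => [|k IH] //; rewrite itmS IH mulmx0. Qed.

Lemma eig_det (F : fieldType) p (A : 'M[F]_p) a :
  eigenvalue A a = (\det (A - a%:M) == 0).
Proof.
apply/eigenvalueP/det0P => [[v Av v0]|[v v0 Av]]; exists v => //.
  by rewrite mulmxBr Av mul_mx_scalar subrr.
by apply/eqP; rewrite -subr_eq0 -mul_mx_scalar -mulmxBr Av.
Qed.

Lemma eig_colP (F : fieldType) p (A : 'M[F]_p) a :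
  reflect (exists2 x : 'cV[F]_p, x != 0 & A *m x = a *: x) (eigenvalue A a).
Proof.
rewrite eig_det -det_tr; apply: (iffP det0P) => [[v v0 vA]|[x x0 Ax]].
  exists v^T; first by rewrite trmx_eq0.
  apply/eqP; rewrite -subr_eq0 -mul_scalar_mx -mulmxBl.
  by rewrite -[A - _]trmxK -trmx_mul vA trmx0.
exists x^T; first by rewrite trmx_eq0.
by rewrite -trmx_mul mulmxBl mul_scalar_mx Ax subrr trmx0.
Qed.

Section Engine.
Variable p' : nat.
Local Notation p := p'.+1.
Variable T : 'M[R[i]]_p.

Lemma hornerXC (z : R[i]) : horner_mx T ('X - z%:P) = T - z%:M.
Proof. by rewrite rmorphB /= horner_mx_X horner_mx_C. Qed.

Lemma horner_comm (r : {poly R[i]}) : horner_mx T r *m T = T *m horner_mx T r.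
Proof.
have e1 : horner_mx T (r * 'X) = horner_mx T r * T by rewrite rmorphM /= horner_mx_X.
have e2 : horner_mx T ('X * r) = T * horner_mx T r by rewrite rmorphM /= horner_mx_X.
by rewrite mulmxE -e1 -e2 mulrC.
Qed.

Lemma horner_fix (r : {poly R[i]}) (w : 'cV[R[i]]_p) : T *m w = w -> horner_mx T r *m w = r.[1] *: w.
Proof.
move=> hw; elim/poly_ind: r => [|r c IH].
  by rewrite rmorph0 mul0mx horner0 scale0r.
rewrite rmorphD rmorphM /= horner_mx_X horner_mx_C mulmxDl -mulmxE -mulmxA hw IH.
by rewrite mul_scalar_mx hornerD hornerMX hornerC mulr1 scalerDl.
Qed.

Lemma small_roots (rs : seq R[i]) : (forall z, z \in rs -> `|z| < 1) ->
  forall y : 'cV[R[i]]_p, horner_mx T (\prod_(z <- rs) ('X - z%:P)) *m y = 0 ->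
  cvg_vec (fun k => itm T k y) 0.
Proof.
elim: rs => [|z rs IH] hrs y.
  rewrite big_nil rmorph1 mul1mx => ->.
  by apply: cvg_vec_of => j e e0; exists 0%N => k _; rewrite itm0 !mxE subrr normr0 ltcR.
rewrite big_cons => hy.
set y' := (T - z%:M) *m y.
have hy' : cvg_vec (fun k => itm T k y') 0.
  apply: IH => [u hu|]; first by apply: hrs; rewrite inE hu orbT.
  rewrite /y' mulmxA.
  have -> : horner_mx T (\prod_(z0 <- rs) ('X - z0%:P)) *m (T - z%:M)
       = horner_mx T (\prod_(z0 <- rs) ('X - z0%:P) * ('X - z%:P)) by rewrite rmorphM /= hornerXC.
  by rewrite mulrC.
have hz : `|z| < 1 by apply: hrs; rewrite inE eqxx.
apply: cvg_vec_of => j; have := cvg_vec_to hy' j.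
have he : forall (v : 'cV[R[i]]_p) j', v j' 0 - (0 : 'cV[R[i]]_p) j' 0 = v j' 0.
  by move=> v j'; rewrite mxE subr0.
apply: scal_cvg hz _ => k /=; rewrite !he.
have -> : itm T k y' = T *m itm T k y - z *: itm T k y.
  rewrite /y' itm_comm; first by rewrite mulmxBl mul_scalar_mx.
  by rewrite mulmxBl mulmxBr mul_mx_scalar mul_scalar_mx.
set u := itm T k y; set Tu := T *m u.
rewrite !mxE; ring.
Qed.

Lemma ones_roots (rs : seq R[i]) : (forall z, z \in rs -> z = 1) ->
  (forall v : 'cV[R[i]]_p, T *m (T *m v - v) = T *m v - v -> T *m v = v) ->
  forall v : 'cV[R[i]]_p, horner_mx T (\prod_(z <- rs) ('X - z%:P)) *m v = 0 -> T *m v = v.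
Proof.
move=> hrs hidx; elim: rs hrs => [|z rs IH] hrs v.
  by rewrite big_nil rmorph1 mul1mx => ->; rewrite mulmx0.
rewrite big_cons (hrs z (mem_head _ _)) rmorphM /= hornerXC -mulmxE => hv.
apply: hidx.
have h1 : T *m v - v = (T - 1%:M) *m v by rewrite mulmxBl mul1mx.
rewrite h1; apply: IH => [u hu|]; first by apply: hrs; rewrite inE hu orbT.
rewrite mulmxA.
have -> : horner_mx T (\prod_(z0 <- rs) ('X - z0%:P)) *m (T - 1%:M)
        = (T - 1%:M) *m horner_mx T (\prod_(z0 <- rs) ('X - z0%:P)).
  by rewrite mulmxBr mulmxBl horner_comm mul1mx mulmx1.
exact: hv.
Qed.

Lemma engine :
  (forall (l : R[i]) (x : 'cV[R[i]]_p), x != 0 -> T *m x = l *: x -> `|l| <= 1) ->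
  (forall (l : R[i]) (x : 'cV[R[i]]_p), x != 0 -> T *m x = l *: x -> `|l| = 1 -> l = 1) ->
  (forall v : 'cV[R[i]]_p, T *m (T *m v - v) = T *m v - v -> T *m v = v) ->
  forall x, exists2 w, T *m w = w & cvg_vec (fun k => itm T k x) w.
Proof.
move=> h1 h2 hidx x.
have [rs hrs] := closed_field_poly_normal (char_poly T).
rewrite (monicP (char_poly_monic T)) scale1r in hrs.
have hroot z : z \in rs -> exists2 u : 'cV[R[i]]_p, u != 0 & T *m u = z *: u.
  by move=> zin; apply/eig_colP; rewrite eigenvalue_root_char hrs root_prod_XsubC.
pose rs1 := [seq z <- rs | z == 1]; pose rs2 := [seq z <- rs | z != 1].
have hsplit : char_poly T = \prod_(z <- rs1) ('X - z%:P) * \prod_(z <- rs2) ('X - z%:P).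
  by rewrite hrs !big_filter (bigID (fun z => z == 1)) /=.
set q := \prod_(z <- rs2) ('X - z%:P).
have hCH := Cayley_Hamilton T; rewrite hsplit rmorphM /= in hCH.
set v := horner_mx T q *m x.
have Tv : T *m v = v.
  apply: (ones_roots (rs := rs1)) => //; first by move=> z; rewrite mem_filter => /andP[/eqP].
  have hCH' : horner_mx T (\prod_(z <- rs1) ('X - z%:P)) *m horner_mx T q = 0 := hCH.
  by rewrite /v mulmxA hCH' mul0mx.
have q1 : q.[1] != 0.
  rewrite /q horner_prod prodf_seq_neq0; apply/allP => z; rewrite mem_filter => /andP[z1 _].
  by rewrite !hornerE subr_eq0 eq_sym.
pose w := (q.[1])^-1 *: v.
have Tw : T *m w = w by rewrite /w -scalemxAr Tv.
exists w => //.
have hsm : cvg_vec (fun k => itm T k (x - w)) 0.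
  apply: (small_roots (rs := rs2)).
    move=> z; rewrite mem_filter => /andP[z1 zin].
    have [u u0 Tu] := hroot z zin.
    have := h1 z u u0 Tu; rewrite le_eqVlt => /orP[/eqP hz|//].
    by move: z1; rewrite (h2 z u u0 Tu hz) eqxx.
  by rewrite mulmxBr (horner_fix q Tw) -/v /w scalerA mulfV // scale1r subrr.
move=> e e0; have [N hN] := hsm e e0; exists N => k Nk j.
have := hN k Nk j; rewrite itmB (itm_fix _ Tw) !mxE subr0 //.
Qed.

End Engine.

Lemma engineA p (T : 'M[R[i]]_p) :
  (forall (l : R[i]) (x : 'cV[R[i]]_p), x != 0 -> T *m x = l *: x -> `|l| <= 1) ->
  (forall (l : R[i]) (x : 'cV[R[i]]_p), x != 0 -> T *m x = l *: x -> `|l| = 1 -> l = 1) ->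
  (forall v : 'cV[R[i]]_p, T *m (T *m v - v) = T *m v - v -> T *m v = v) ->
  forall x, exists2 w, T *m w = w & cvg_vec (fun k => itm T k x) w.
Proof.
case: p T => [|p'] T; last exact: engine.
move=> _ _ _ x; exists 0; first by rewrite mulmx0.
by move=> e e0; exists 0%N => k _ [].
Qed.
End Scal.

Section Helpers.
Variable F : numClosedFieldType.

Lemma qform_diag n1 n2 (a : 'M[F]_n1) (d : 'M[F]_n2) x y :
  qform (block_mx a 0 0 d) (col_mx x y) = qform a x + qform d y.
Proof.
by rewrite /qform ctrmx_col mul_row_block !mulmx0 addr0 add0r mul_row_col mxE.
Qed.

Lemma qform_block n1 n2 (H : 'M[F]_(n1 + n2)) x :
  qform H x = qform H (col_mx (usubmx x) (dsubmx x)).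
Proof. by rewrite vsubmxK. Qed.

Lemma dot_sum p (y : 'cV[F]_p) : (ctrmx y *m y) 0 0 = \sum_i `|y i 0| ^+ 2.
Proof. by rewrite mxE; apply: eq_bigr => i _; rewrite ctrmxE normCK mulrC. Qed.

Lemma dot_ge0 p (y : 'cV[F]_p) : 0 <= (ctrmx y *m y) 0 0.
Proof. by rewrite dot_sum; apply: sumr_ge0 => i _; rewrite exprn_ge0. Qed.

Lemma dot_eq0 p (y : 'cV[F]_p) : (ctrmx y *m y) 0 0 = 0 -> y = 0.
Proof.
rewrite dot_sum => /eqP; rewrite psumr_eq0 => [|i _]; last by rewrite exprn_ge0.
move=> /allP h; apply/matrixP => i j; rewrite (ord1 j) mxE.
have /h : i \in index_enum 'I_p by rewrite mem_index_enum.
by rewrite /= sqrf_eq0 normr_eq0 => /eqP.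
Qed.

Lemma hpd_add p (H K : 'M[F]_p) : hpd H -> hpd K -> hpd (H + K).
Proof.
move=> [hH pH] [hK pK]; split; first by rewrite /Defs.hermitian ctrmxD hH hK.
by move=> x x0; rewrite qformDm addr_gt0 ?pH ?pK.
Qed.

Lemma hpd_add_psd p (H K : 'M[F]_p) : hpd H -> hpsd K -> hpd (H + K).
Proof.
move=> [hH pH] [hK pK]; split; first by rewrite /Defs.hermitian ctrmxD hH hK.
by move=> x x0; rewrite qformDm ltr_wpDr ?pH ?pK.
Qed.

Lemma hpd_unit p (H : 'M[F]_p) : hpd H -> H \in unitmx.
Proof. by move=> hH; apply: unit_of_pd; case: (hH) => e _; rewrite e; apply: hpd_add. Qed.

Lemma hpd_ge0 p (H : 'M[F]_p) x : hpd H -> 0 <= qform H x.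
Proof.
move=> [_ pH]; have [->|x0] := eqVneq x 0; last exact/ltW/pH.
by rewrite /qform mulmx0 mxE.
Qed.

Lemma hpd_inv p (H : 'M[F]_p) : hpd H -> hpd (invmx H).
Proof.
move=> hpH; have Hu := hpd_unit hpH; case: hpH => hH pH.
have hi : Defs.hermitian (invmx H) by rewrite /Defs.hermitian ctrmx_inv hH.
split => // x x0.
have -> : qform (invmx H) x = qform H (invmx H *m x).
  by rewrite -qform_mul hi -mulmxA mulmxV // mulmx1.
by apply: pH; apply: contra x0 => /eqP h; rewrite -[x](mulKVmx Hu) h mulmx0.
Qed.

Lemma qformN p (H : 'M[F]_p) x : qform (- H) x = - qform H x.
Proof. by rewrite /qform mulmxN mulNmx mxE. Qed.

Lemma qformB p (H K : 'M[F]_p) x : qform (H - K) x = qform H x - qform K x.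
Proof. by rewrite qformDm qformN. Qed.

Lemma qformZm p (H : 'M[F]_p) a x : qform (a *: H) x = a * qform H x.
Proof. by rewrite /qform -scalemxAr -scalemxAl mxE. Qed.

Variables (p : nat) (Sg : 'M[F]_p).
Hypothesis hSg : Defs.hermitian Sg.
Hypothesis uSg : Sg \in unitmx.

Lemma bf_Sg_l x y : bf (invmx Sg) (Sg *m x) y = (ctrmx x *m y) 0 0.
Proof. by rewrite /bf ctrmx_mul hSg mulmxK. Qed.

Lemma bf_Sg_r x y : bf (invmx Sg) y (Sg *m x) = (ctrmx y *m x) 0 0.
Proof. by rewrite /bf mulmxA mulmxKV. Qed.

Lemma qform_Sg x : qform (invmx Sg) (Sg *m x) = qform Sg x.
Proof. by rewrite qformE bf_Sg_l /qform mulmxA. Qed.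

Lemma qform_SgD (X : 'M[F]_p) z :
  qform (invmx Sg) ((Sg + X) *m z)
  = qform Sg z + qform X z + (qform X z)^* + qform (invmx Sg) (X *m z).
Proof.
rewrite mulmxDl qformD qform_Sg bf_Sg_l bf_Sg_r -qform_ctr.
by rewrite /qform ctrmx_mul !mulmxA.
Qed.

Lemma qform_SgB (X : 'M[F]_p) z :
  qform (invmx Sg) ((Sg - X) *m z)
  = qform Sg z - qform X z - (qform X z)^* + qform (invmx Sg) (X *m z).
Proof.
rewrite mulmxBl qformD qform_Sg -scaleN1r bfZr bfZl qformZ bf_Sg_l bf_Sg_r.
rewrite normrN normr1 expr1n mul1r -qform_ctr rmorphN1 !mulN1r.
by rewrite /qform ctrmx_mul !mulmxA.
Qed.

End Helpers.

Lemma realC (R : realType) (x : R[i]) : 0 <= x -> x = ((Re x)%:C)%C.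
Proof. by case: x => a b /ger0_Im /= ->. Qed.

Definition ffr (F : numClosedFieldType) p (r v : 'cV[F]_p) : F := (ctrmx r *m v) 0 0.
Lemma ffrD (F : numClosedFieldType) p (r v w : 'cV[F]_p) : ffr r (v + w) = ffr r v + ffr r w.
Proof. by rewrite /ffr mulmxDr mxE. Qed.
Lemma ffrN (F : numClosedFieldType) p (r v : 'cV[F]_p) : ffr r (- v) = - ffr r v.
Proof. by rewrite /ffr mulmxN mxE. Qed.
Lemma ffrB (F : numClosedFieldType) p (r v w : 'cV[F]_p) : ffr r (v - w) = ffr r v - ffr r w.
Proof. by rewrite ffrD ffrN. Qed.
Lemma ffrZ (F : numClosedFieldType) p (r v : 'cV[F]_p) a : ffr r (a *: v) = a * ffr r v.
Proof. by rewrite /ffr -scalemxAr mxE. Qed.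
Lemma qform_ffr (F : numClosedFieldType) p (X : 'M[F]_p) r : qform X r = ffr r (X *m r).
Proof. by rewrite /qform /ffr mulmxA. Qed.

Lemma conjR (R : realType) (c : R) : (c%:C)%C^* = (c%:C)%C :> R[i].
Proof. exact: conjc_real. Qed.

Lemma psd_null (R : realType) p (H : 'M[R[i]]_p) x :
  hpsd H -> qform H x = 0 -> H *m x = 0.
Proof.
move=> [hH pH] q0; set y := H *m x.
pose k := (ctrmx y *m y) 0 0; pose u := qform H y.
have k0 : 0 <= k := dot_ge0 y.
have u0 : 0 <= u := pH y.
have hxy : bf H x y = k by rewrite /bf /k /y ctrmx_mul hH !mulmxA.
have hyx : bf H y x = k by rewrite bf_herm // hxy geC0_conj.
apply: dot_eq0; rewrite -/k.
set k' := Re k in k0 *; set u' := Re u.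
have k'0 : 0 <= k' by rewrite -ler0c -realC.
have u'0 : 0 <= u' by rewrite -ler0c -realC.
pose w := u' + 1; pose t' := - (k' / w).
have w0 : 0 < w by rewrite /w; lra.
have tw : t' * w = - k' by rewrite /t' mulNr divfK // gt_eqF.
have := pH (x + (t'%:C)%C *: y).
rewrite qformD q0 bfZr bfZl qformZ hxy hyx add0r conjR.
have ek : k = (k'%:C)%C := realC k0.
have eu : u = (u'%:C)%C := realC u0.
rewrite -/u normCK conjR ek eu -!rmorphM -!rmorphD /= ler0c => hle.
suff -> : k' = 0 by [].
have hle' : 0 <= t' * (k' - t').
  have e : t' * k' + t' * k' + t' * t' * u' = t' * (k' - t').
    have -> : u' = w - 1 by rewrite /w; lra.
    by rewrite mulrBr mulr1 -mulrA tw; ring.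
  by rewrite -e.
have tle : t' <= 0 by rewrite /t' oppr_le0 divr_ge0 // ltW.
nra.
Qed.

Theorem theorem1 (R : realType) (n m : nat)
  (A AP AS : 'M[R[i]]_n) (B BP BS : 'M[R[i]]_(m, n)) (C CP CS : 'M[R[i]]_m)
  (Palpha : 'M[R[i]]_n) (Pbeta : 'M[R[i]]_m) (b : 'cV[R[i]]_(n + m)) :
  (m <= n)%N ->
  posdef A -> possemidef C ->
  \det (saddle A B C) = 0 ->
  (exists u : 'cV[R[i]]_(n + m), saddle A B C *m u = b) ->
  A = AP + AS -> posdef AP -> skew_hermitian AS ->
  C = CP + CS -> possemidef CP -> skew_hermitian CS ->
  B = BP + BS ->
  hpd Palpha -> hpd Pbeta ->
  let Pc := saddle AP BP CP in
  let Sc := saddle AS BS CS in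
  let Sigma := block_mx Palpha 0 0 Pbeta in
  let Gamma := invmx (Sigma + Sc) *m (Sigma - Pc) *m invmx (Sigma + Pc) *m (Sigma - Sc) in
  let c := 2%:R *: (invmx (Sigma + Sc) *m Sigma *m invmx (Sigma + Pc) *m b) in
  (forall lambda : R[i], eigenvalue Gamma lambda -> `|lambda| = 1 -> lambda != 1 ->
     forall r : 'cV[R[i]]_m, r != 0 -> (C + ctrmx C) *m r = 0 ->
       qform (Pbeta - BS *m invmx Palpha *m ctrmx BP + CS *m invmx Pbeta *m CP) r
         != (1 + lambda) / (1 - lambda) * qform C r) ->
  semi_convergent Gamma c (saddle A B C) b.
Proof.
move=> hmn pA pC hdet [us hus] eA pAP sAS eC pCP sCS eB pPa pPb Pc Sc Sigma Gamma c hyp.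
have eGam : Gamma = invmx (Sigma + Sc) *m (Sigma - Pc) *m invmx (Sigma + Pc) *m (Sigma - Sc) by [].
have ec : c = 2%:R *: (invmx (Sigma + Sc) *m Sigma *m invmx (Sigma + Pc) *m b) by [].
have ePc : Pc = saddle AP BP CP by [].
have eSc : Sc = saddle AS BS CS by [].
have eSig : Sigma = block_mx Palpha 0 0 Pbeta by [].
clearbody Pc Sc Sigma Gamma c.
have uPa : Palpha \in unitmx := hpd_unit pPa.
have uPb : Pbeta \in unitmx := hpd_unit pPb.
have hSig : Defs.hermitian Sigma.
  by rewrite /Defs.hermitian eSig ctrmx_block !ctrmx0 pPa.1 pPb.1.
have hpdSig : hpd Sigma.
  split => // x x0; rewrite qform_block eSig qform_diag.
  have [x1_0|x1n] := eqVneq (usubmx x) 0.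
    have x2n : dsubmx x != 0.
      by apply: contra x0 => /eqP h; rewrite -[x]vsubmxK x1_0 h col_mx0.
    by apply: ltr_wpDl; [exact: hpd_ge0 | exact: pPb.2].
  by apply: ltr_wpDr; [exact: hpd_ge0 | exact: pPa.2].
have skS : ctrmx Sc = - Sc.
  by rewrite eSc /saddle ctrmx_block ctrmxK sAS sCS ctrmxN opp_block_mx opprK.
have ePP : Pc + ctrmx Pc = block_mx (AP + ctrmx AP) 0 0 (CP + ctrmx CP).
  by rewrite ePc /saddle ctrmx_block ctrmxK ctrmxN add_block_mx subrr addNr.
have psdP : forall z : 'cV[R[i]]_(n + m), 0 <= qform (Pc + ctrmx Pc) z.
  move=> z; rewrite qform_block ePP qform_diag addr_ge0 //; first exact: hpd_ge0.
  exact: pCP.2.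
have hpdSS : hpd (Sigma + Sigma) by apply: hpd_add.
have [M eM] : exists M, M = Sigma + Sc by eexists.
have [N eN] : exists N, N = Sigma + Pc by eexists.
rewrite -eM -eN in eGam ec.
have uSig : Sigma \in unitmx := hpd_unit hpdSig.
have uM : M \in unitmx.
  by apply: unit_of_pd; rewrite eM ctrmxD hSig skS addrACA subrr addr0.
have uMm : Sigma - Sc \in unitmx.
  by apply: unit_of_pd; rewrite ctrmxB hSig skS opprK addrACA addNr addr0.
have hPP : hpsd (Pc + ctrmx Pc).
  split => //; by rewrite /Defs.hermitian ctrmxD ctrmxK addrC.
have uN : N \in unitmx.
  by apply: unit_of_pd; rewrite eN ctrmxD hSig addrACA; apply: hpd_add_psd.
have [Si eSi] : exists Si, Si = invmx Sigma by eexists.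
have hpdSi : hpd Si by rewrite eSi; exact: hpd_inv.
have [H eH] : exists H, H = ctrmx M *m Si *m M by eexists.
have qH : forall x : 'cV[R[i]]_(n + m), qform H x = qform Si (M *m x).
  by move=> x; rewrite eH qform_mul.
have hpdH : hpd H.
  split.
    by rewrite /Defs.hermitian eH !ctrmx_mul ctrmxK hpdSi.1 mulmxA.
  move=> x x0; rewrite qH; apply: hpdSi.2.
  by apply: contra x0 => /eqP h; rewrite -[x](mulKmx uM) h mulmx0.
have K1 : forall e : 'cV[R[i]]_(n + m), qform H e = qform Si (N *m (invmx N *m ((Sigma - Sc) *m e))).
  move=> e; rewrite qH (mulKVmx uN) eM eSi (qform_SgD hSig uSig) (qform_SgB hSig uSig).
  have hs : (qform Sc e)^* = - qform Sc e by rewrite -qform_ctr skS qformN.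
  by rewrite hs opprK addrK subrK.
have K2 : forall e : 'cV[R[i]]_(n + m), M *m (Gamma *m e) = (Sigma - Pc) *m (invmx N *m ((Sigma - Sc) *m e)).
  by move=> e; rewrite eGam !mulmxA (mulmxV uM) mul1mx.
have K3 : forall z : 'cV[R[i]]_(n + m), qform Si (N *m z) = qform Si ((Sigma - Pc) *m z) + 2%:R * qform (Pc + ctrmx Pc) z.
  move=> z; rewrite eN eSi (qform_SgD hSig uSig) (qform_SgB hSig uSig) qformDm qform_ctr.
  ring.
have contr : forall x : 'cV[R[i]]_(n + m), qform H (Gamma *m x) <= qform H x.
  move=> x; rewrite (K1 x) K3 qH K2 lerDl; apply: mulr_ge0 => //.
have h1 := contr_eig hpdH contr.
have h3 := contr_idx hpdH contr.
have h2 : forall (l : R[i]) (x : 'cV[R[i]]_(n + m)), x != 0 -> Gamma *m x = l *: x -> `|l| = 1 -> l = 1.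
  move=> l x x0 Tx l1; apply/eqP; apply: contraT => ln1.
  have eig : eigenvalue Gamma l by apply/eig_colP; exists x.
  have [z ez0] : exists z, z = invmx N *m ((Sigma - Sc) *m x) by eexists.
  have eNz : N *m z = (Sigma - Sc) *m x by rewrite ez0 (mulKVmx uN).
  have ePz : (Sigma - Pc) *m z = l *: ((Sigma + Sc) *m x) by rewrite ez0 -K2 Tx -scalemxAr eM.
  have hq : qform (Pc + ctrmx Pc) z = 0.
    have e1 := K1 x; rewrite K3 -ez0 in e1.
    have e2 := qH (Gamma *m x); rewrite K2 -ez0 Tx qformZ l1 expr1n mul1r in e2.
    rewrite e2 in e1.
    have : 2%:R * qform (Pc + ctrmx Pc) z = 0.
      by apply: (addrI (qform Si ((Sigma - Pc) *m z))); rewrite addr0 -e1.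
    by move/eqP; rewrite mulf_eq0 pnatr_eq0 /= => /eqP.
  have [z1 [z2 ez]] : exists z1 z2, z = col_mx z1 z2.
    by exists (usubmx z), (dsubmx z); rewrite vsubmxK.
  rewrite ez ePP qform_diag in hq.
  have [h1z h2z] : qform (AP + ctrmx AP) z1 = 0 /\ qform (CP + ctrmx CP) z2 = 0.
    move/eqP: hq; rewrite paddr_eq0; last exact: pCP.2; last exact: hpd_ge0.
    by move=> /andP[/eqP -> /eqP ->].
  have z1_0 : z1 = 0.
    by apply/eqP; apply: contraT => nz; have := pAP.2 z1 nz; rewrite h1z ltxx.
  have hCr : (CP + ctrmx CP) *m z2 = 0 := psd_null pCP h2z.
  have r0 : z2 != 0.
    apply: contra x0 => /eqP h; apply/eqP.
    have : (Sigma - Sc) *m x = 0 by rewrite -eNz ez z1_0 h col_mx0 mulmx0.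
    by move/(congr1 (mulmx (invmx (Sigma - Sc)))); rewrite (mulKmx uMm) mulmx0.
  have hCC : (C + ctrmx C) *m z2 = 0.
    by rewrite eC ctrmxD sCS addrACA subrr addr0.
  have := hyp l eig l1 ln1 z2 r0 hCC; move/negP => hne; exfalso; apply: hne; apply/eqP.
  have kv : Sc *m (Si *m (l *: (N *m z) + (Sigma - Pc) *m z)) = (Sigma - Pc) *m z - l *: (N *m z).
    rewrite eNz ePz -scalerDr -mulmxDl.
    have -> : Sigma - Sc + (Sigma + Sc) = Sigma + Sigma by rewrite addrACA addNr addr0.
    rewrite -scalerBr -mulmxBl.
    have -> : Sigma + Sc - (Sigma - Sc) = Sc + Sc by rewrite opprD opprK addrACA subrr add0r.
    by rewrite -scalemxAr mulmxDl mulmxDr eSi (mulKmx uSig) -scalemxAr mulmxDr mulmxDl.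
  have hN : N = block_mx (Palpha + AP) (ctrmx BP) (- BP) (Pbeta + CP).
    by rewrite eN eSig ePc /saddle add_block_mx !add0r.
  have hSP : Sigma - Pc = block_mx (Palpha - AP) (- ctrmx BP) BP (Pbeta - CP).
    by rewrite eSig ePc /saddle opp_block_mx add_block_mx !add0r opprK.
  have hSi : Si = block_mx (invmx Palpha) 0 0 (invmx Pbeta).
    by rewrite eSi eSig invmx_block_diag // -eSig.
  rewrite ez z1_0 hN hSP hSi eSc /saddle in kv.
  rewrite !(mul_block_col, mulmx0, add0r, addr0, scale_col_mx, add_col_mx, opp_col_mx) in kv.
  case/eq_col_mx: kv => _ kb.
  rewrite !(mul0mx, addr0, add0r) in kb.
  rewrite !(mulmxDr, mulmxDl, mulmxBl, mulmxN, mulNmx, mulmxBr) in kb.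
  rewrite -!scalemxAr in kb.
  rewrite !(mulmxDr, mulmxDl, mulmxBl, mulmxN, mulNmx, mulmxBr) in kb.
  have kf := congr1 (ffr z2) kb.
  rewrite !(ffrD, ffrN, ffrZ, ffrB) !mulmxA (mulmxKV uPb) in kf.
  rewrite qformDm qformB eC qformDm !qform_ffr.
  have l1n0 : 1 - l != 0 by rewrite subr_eq0 eq_sym.
  move: kf.
  move: (ffr z2 (Pbeta *m z2)) (ffr z2 (CP *m z2)) (ffr z2 (CS *m z2)) (ffr z2 (CS *m invmx Pbeta *m CP *m z2)) (ffr z2 (BS *m invmx Palpha *m ctrmx BP *m z2)) => q4 q5 q2 q3 q1 kf.
  apply: (mulfI l1n0); rewrite [RHS]mulrA [in RHS](mulrC (1 - l)) divfK //.
  apply/eqP; rewrite -subr_eq0; apply/eqP.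
  transitivity (-((-(l * q1 - q1) + (l * (q2 + q3) + (q2 - q3))) - (q4 - q5 - l * (q4 + q5)))).
    by ring.
  by rewrite kf subrr oppr0.
have eAS0 : saddle A B C = Pc + Sc.
  by rewrite ePc eSc /saddle add_block_mx eA eB eC ctrmxD opprD.
have eAS : saddle A B C = N - (Sigma - Sc).
  by rewrite eAS0 eN opprB addrA [RHS]addrC addrA addKr.
have fixl : forall u : 'cV[R[i]]_(n + m), M *m (u - Gamma *m u) = 2%:R *: (Sigma *m (invmx N *m (saddle A B C *m u))).
  move=> u; have [y ey] : exists y, y = invmx N *m ((Sigma - Sc) *m u) by eexists.
  have Ny : N *m y = (Sigma - Sc) *m u by rewrite ey (mulKVmx uN).
  have e1 : Sigma - Pc = (Sigma + Sigma) - N by rewrite eN opprD addrACA subrr add0r.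
  rewrite mulmxBr K2 -ey e1 mulmxBl Ny opprB addrA -mulmxDl.
  have -> : M + (Sigma - Sc) = Sigma + Sigma by rewrite eM addrACA subrr addr0.
  rewrite eAS mulmxBl mulmxBr (mulKmx uN) -ey -mulmxBr scaler_nat mulr2n mulmxDl //.
have fixw : forall w : 'cV[R[i]]_(n + m), Gamma *m w = w -> saddle A B C *m w = 0.
  move=> w hw; have := fixl w; rewrite hw subrr mulmx0 => /esym /eqP.
  rewrite scaler_eq0 pnatr_eq0 /= => /eqP h.
  have h' : invmx N *m (saddle A B C *m w) = 0 by rewrite -[LHS](mulKmx uSig) h mulmx0.
  by rewrite -[LHS](mulKVmx uN) h' mulmx0.
have fixus : Gamma *m us + c = us.
  have : M *m (us - Gamma *m us) = M *m c.
    by rewrite fixl hus ec -scalemxAr !mulmxA (mulmxV uM) mul1mx.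
  move/(canRL (mulKmx uM)); rewrite (mulKmx uM) => <-.
  by rewrite addrC subrK.
move=> u0.
have [w Tw hw] := engineA h1 h2 h3 (u0 - us).
exists (us + w); first by rewrite mulmxDr hus fixw // addr0.
have iterE : forall k, iterates Gamma c u0 k = us + itm Gamma k (u0 - us).
  elim=> [|k IH]; first by rewrite /iterates /= addrC subrK.
  rewrite /iterates iterS -/(iterates Gamma c u0 k) IH itmS mulmxDr.
  by rewrite addrAC fixus.
move=> e e0; have [K hK] := hw e e0; exists K => k Kk j.
rewrite iterE !mxE (_ : _ - _ = itm Gamma k (u0 - us) j 0 - w j 0); [exact: hK | ring].
Qed.
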